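(* For $\xi,X\in\mathbb R^2$ let $$I(\xi,X)=\Big\{\theta\in[-\pi/2,\pi/2]:\ \big\langle\xi,(I+A(\theta))^{-1}A'(\theta)X\big\rangle^2\ge\theta^2|X|^2|\xi|^2/128\Big\}.$$ Then for all $\xi,X\in\mathbb R^2$, either $(0,\pi/2]\subset I(\xi,X)$ or $[-\pi/2,0)\subset I(\xi,X)$.
   Context: $A(\theta)=\frac12(R_\theta-I)=\frac12\begin{pmatrix}\cos\theta-1&-\sin\theta\\ \sin\theta&\cos\theta-1\end{pmatrix}$, where $R_\theta$ is the rotation of angle $\theta$; $A'(\theta)$ is its derivative in $\theta$, and $I$ is the $2\times2$ identity matrix. *)

(* Defs.v *)
From Stdlib Require Import Reals Lra.
Open Scope R_scope.

Definition vec2 : Type := (R * R)%type.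
Record mat2 : Type := Mat2 { m11 : R; m12 : R; m21 : R; m22 : R }.

Definition inner (u v : vec2) : R := fst u * fst v + snd u * snd v.
Definition normsq (u : vec2) : R := inner u u.

Definition mat_id : mat2 := Mat2 1 0 0 1.
Definition mat_add (M N : mat2) : mat2 :=
  Mat2 (m11 M + m11 N) (m12 M + m12 N) (m21 M + m21 N) (m22 M + m22 N).
Definition mat_mul (M N : mat2) : mat2 :=
  Mat2 (m11 M * m11 N + m12 M * m21 N) (m11 M * m12 N + m12 M * m22 N)
       (m21 M * m11 N + m22 M * m21 N) (m21 M * m12 N + m22 M * m22 N).
Definition mat_vec (M : mat2) (v : vec2) : vec2 :=
  (m11 M * fst v + m12 M * snd v, m21 M * fst v + m22 M * snd v).
Definition det2 (M : mat2) : R := m11 M * m22 M - m12 M * m21 M.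
(* Inverse of a 2x2 matrix (adjugate / determinant); it is the genuine
   inverse whenever det2 M <> 0. *)
Definition mat_inv (M : mat2) : mat2 :=
  Mat2 (m22 M / det2 M) (- m12 M / det2 M) (- m21 M / det2 M) (m11 M / det2 M).

(* A(theta) = (R_theta - I)/2 *)
Definition Amat (t : R) : mat2 :=
  Mat2 ((cos t - 1) / 2) (- sin t / 2) (sin t / 2) ((cos t - 1) / 2).
Definition Amat' (t : R) : mat2 :=
  Mat2 (- sin t / 2) (- cos t / 2) (cos t / 2) (- sin t / 2).

Definition Iset (xi X : vec2) (t : R) : Prop :=
  - PI / 2 <= t <= PI / 2 /\
  (inner xi (mat_vec (mat_mul (mat_inv (mat_add mat_id (Amat t))) (Amat' t)) X)) ^ 2
    >= t ^ 2 * normsq X * normsq xi / 128.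

Lemma Amat'_is_derivative (t : R) :
  derivable_pt_lim (fun s => m11 (Amat s)) t (m11 (Amat' t)) /\
  derivable_pt_lim (fun s => m12 (Amat s)) t (m12 (Amat' t)) /\
  derivable_pt_lim (fun s => m21 (Amat s)) t (m21 (Amat' t)) /\
  derivable_pt_lim (fun s => m22 (Amat s)) t (m22 (Amat' t)).
Proof.
  assert (Hc : derivable_pt_lim (fun s => (cos s - 1) / 2) t (- sin t / 2)).
  { replace (- sin t / 2) with ((- sin t - 0) * / 2) by (unfold Rdiv; ring).
    apply (derivable_pt_lim_scal_right (fun s => cos s - 1) t (- sin t - 0) (/2)).
    apply derivable_pt_lim_minus; [apply derivable_pt_lim_cos | apply derivable_pt_lim_const]. }
  assert (Hs : derivable_pt_lim (fun s => sin s / 2) t (cos t / 2)).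
  { apply (derivable_pt_lim_scal_right sin t (cos t) (/2)). apply derivable_pt_lim_sin. }
  assert (Hs' : derivable_pt_lim (fun s => - sin s / 2) t (- cos t / 2)).
  { replace (- cos t / 2) with ((- cos t) * / 2) by (unfold Rdiv; ring).
    apply (derivable_pt_lim_scal_right (fun s => - sin s) t (- cos t) (/2)).
    apply derivable_pt_lim_opp. apply derivable_pt_lim_sin. }
  simpl. repeat split; assumption.
Qed.

(* Main.v *)
Require Import Defs.
From Stdlib Require Import Reals Lra Psatz.
Open Scope R_scope.
Lemma sinb t : 0 <= t <= PI/2 -> t^2 <= 8 * (sin t)^2.
Proof.
intros [H0 H1].
pose proof PI_4. pose proof PI2_Rlt_PI.
destruct (SIN t H0 ltac:(lra)) as [Hl _].
unfold sin_lb, sin_approx, sin_term in Hl. simpl in Hl.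

assert (Ht : t <= 2) by lra.
assert (t * (1 - t^2/6 + t^4/120 - t^6/5040) <= sin t).
{ revert Hl. match goal with |- ?a <= _ -> _ => replace a with (t * (1 - t^2/6 + t^4/120 - t^6/5040)) by (field) end. auto. }
assert (K: 0.4 <= 1 - t^2/6 + t^4/120 - t^6/5040).
{ assert (0 <= t^2 <= 4) by nra. set (x := t^2) in *.
  replace (t^4) with (x^2) by (unfold x; ring). replace (t^6) with (x^3) by (unfold x; ring). nra. }
assert (0.4*t <= sin t) by nra. nra.
Qed.
Lemma keyeq xi X t : - PI/2 <= t <= PI/2 ->
  inner xi (mat_vec (mat_mul (mat_inv (mat_add mat_id (Amat t))) (Amat' t)) X)
  = ((snd xi * fst X - fst xi * snd X) - sin t / (1 + cos t) * inner xi X) / 2.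
Proof.
intros Ht. assert (Hc : 0 <= cos t) by (apply cos_ge_0; lra).
pose proof (sin2_cos2 t) as E. unfold Rsqr in E.
assert (Hd : det2 (mat_add mat_id (Amat t)) = (1 + cos t)/2).
{ unfold det2, mat_add, mat_id, Amat; simpl. field_simplify. nra. }
assert (Hi : mat_inv (mat_add mat_id (Amat t)) = Mat2 1 (sin t/(1+cos t)) (-(sin t/(1+cos t))) 1).
{ unfold mat_inv. rewrite Hd. unfold mat_add, mat_id, Amat; simpl. f_equal; field; lra. }
rewrite Hi.
destruct xi as [x1 x2]; destruct X as [y1 y2].
unfold inner, mat_vec, mat_mul, Amat'; simpl.
field_simplify.
2,3: lra. f_equal. replace (sin t ^ 2) with (1 - cos t ^ 2) by nra. ring. Qed.
Lemma ineq a b s c t : 0 <= c -> s*s + c*c = 1 -> t^2 <= 8 * s^2 -> s*(a*b) <= 0 ->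
  ((b - s/(1+c)*a)/2)^2 >= t^2 * (a^2+b^2)/128.
Proof.
intros Hc E Ht Hab.
assert (Hc1 : c <= 1) by nra.
set (u := s/(1+c)).
assert (Hu : u*(1+c) = s) by (unfold u; field; lra).
assert (Hs : s^2 <= 4*u^2) by (rewrite <- Hu; nra).
assert (Hu2 : u*(a*b) <= 0).
{ assert (u = s * /(1+c)) by (unfold u; reflexivity).
  assert (0 < /(1+c)) by (apply Rinv_0_lt_compat; lra).
  rewrite H. nra. }
assert (Hs1 : s^2 <= 1) by nra.
assert (HA : t^2*a^2 <= 32*u^2*a^2) by nra.
assert (HB : t^2*b^2 <= 32*b^2) by nra.
nra.
Qed.

Theorem lemma4p7 (xi X : vec2) :
  (forall t, 0 < t <= PI / 2 -> Iset xi X t) \/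
  (forall t, - PI / 2 <= t < 0 -> Iset xi X t).
Proof.
pose proof PI2_RGT_0 as HP.
assert (HN : normsq X * normsq xi = (inner xi X)^2 + (snd xi * fst X - fst xi * snd X)^2).
{ unfold normsq, inner. ring. }
destruct (Rle_dec (inner xi X * (snd xi * fst X - fst xi * snd X)) 0) as [H|H];
[left|right]; intros t Ht; (split; [lra|]);
rewrite keyeq by lra; rewrite Rmult_assoc, HN;
(apply ineq; [apply cos_ge_0; lra | pose proof (sin2_cos2 t) as E; unfold Rsqr in E; lra | | ]).
- apply sinb; lra.
- assert (0 <= sin t) by (apply sin_ge_0; lra). nra.
- replace (sin t) with (- sin (-t)) by (rewrite sin_neg; ring).
  replace (t^2) with ((-t)^2) by ring. replace ((- sin (-t))^2) with (sin (-t) ^2) by ring.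
  apply sinb; lra.
- assert (0 <= sin (-t)) by (apply sin_ge_0; lra). rewrite sin_neg in H0. nra.
Qed.
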